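(* Let $P_{(\pm)}$ be as below and, for $v\in\mathbb C$, set $\hat R_+(v)=I+vP_{(+)}$ and $\hat R_-(v)=I+vP_{(-)}$. If $v,v',v''\in\mathbb C$ satisfy $vv''\neq4$ and $v'=\dfrac{v+v''+vv''}{1-\frac14vv''}$, then $$\hat R_{\pm,(12)}(v)\,\hat R_{\pm,(23)}(v')\,\hat R_{\pm,(12)}(v'')=\hat R_{\pm,(23)}(v'')\,\hat R_{\pm,(12)}(v')\,\hat R_{\pm,(23)}(v)$$ (for each choice of sign, with the same sign throughout).
   Context: $P_{(+)}=\tfrac12\begin{pmatrix}1&0&0&1\\0&0&0&0\\0&0&0&0\\1&0&0&1\end{pmatrix}$, $P_{(-)}=\tfrac12\begin{pmatrix}1&0&0&-1\\0&0&0&0\\0&0&0&0\\-1&0&0&1\end{pmatrix}$, $I$ the $4\times4$ identity. For a $4\times4$ matrix $A$ acting on $\mathbb C^2\otimes\mathbb C^2$ (basis ordered $e_1\otimes e_1,e_1\otimes e_2,e_2\otimes e_1,e_2\otimes e_2$), $A_{(12)}=A\otimes I_2$ and $A_{(23)}=I_2\otimes A$ on $(\mathbb C^2)^{\otimes 3}$. *)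

(* Defs.v *)
From HB Require Import structures.
From mathcomp Require Import all_boot all_order all_algebra.
From mathcomp Require Import mxtens.
Set Implicit Arguments. Unset Strict Implicit. Unset Printing Implicit Defensive.
Import Order.TTheory GRing.Theory Num.Theory.
Local Open Scope ring_scope.

(* Complex scalars: C is any numClosedFieldType (the complex numbers are one). *)

(* P_(+) and P_(-) as 4x4 matrices, basis e1(x)e1, e1(x)e2, e2(x)e1, e2(x)e2. *)
Definition Pplus (C : numClosedFieldType) : 'M[C]_4 :=
  \matrix_(i < 4, j < 4) (2^-1 *
    nth 0 (nth [::] ([:: [:: 1; 0; 0; 1];
                         [:: 0; 0; 0; 0];
                         [:: 0; 0; 0; 0];
                         [:: 1; 0; 0; 1]] : seq (seq C)) i) j).

Definition Pminus (C : numClosedFieldType) : 'M[C]_4 :=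
  \matrix_(i < 4, j < 4) (2^-1 *
    nth 0 (nth [::] ([:: [:: 1; 0; 0; -1];
                         [:: 0; 0; 0; 0];
                         [:: 0; 0; 0; 0];
                         [:: -1; 0; 0; 1]] : seq (seq C)) i) j).

Definition Rplus (C : numClosedFieldType) (v : C) : 'M[C]_4 := 1%:M + v *: Pplus C.
Definition Rminus (C : numClosedFieldType) (v : C) : 'M[C]_4 := 1%:M + v *: Pminus C.

(* A_(12) = A (x) I_2 and A_(23) = I_2 (x) A on (C^2)^(x)3 (Kronecker product,
   first factor = most significant index, as in mxtens.tensmx). *)
Definition op12 (C : numClosedFieldType) (A : 'M[C]_4) : 'M[C]_8 :=
  (A *t (1%:M : 'M[C]_2)).
Definition op23 (C : numClosedFieldType) (A : 'M[C]_4) : 'M[C]_8 :=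
  ((1%:M : 'M[C]_2) *t A).

(* Main.v *)
Require Import Defs.
From HB Require Import structures.
From mathcomp Require Import all_boot all_order all_algebra.
From mathcomp Require Import mxtens ring.
Import Order.TTheory GRing.Theory Num.Theory.
Local Open Scope ring_scope.

Definition tbl {C : ringType} (T : seq (seq C)) : 'M[C]_8 :=
  \matrix_(i < 8, j < 8) nth 0 (nth [::] T i) j.

Definition TAp {C : ringType} : seq (seq C) :=
  [:: [:: 1; 0; 0; 0; 0; 0; 1; 0];
    [:: 0; 1; 0; 0; 0; 0; 0; 1];
    [:: 0; 0; 0; 0; 0; 0; 0; 0];
    [:: 0; 0; 0; 0; 0; 0; 0; 0];
    [:: 0; 0; 0; 0; 0; 0; 0; 0];
    [:: 0; 0; 0; 0; 0; 0; 0; 0];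
    [:: 1; 0; 0; 0; 0; 0; 1; 0];
    [:: 0; 1; 0; 0; 0; 0; 0; 1]].
Definition TBp {C : ringType} : seq (seq C) :=
  [:: [:: 1; 0; 0; 1; 0; 0; 0; 0];
    [:: 0; 0; 0; 0; 0; 0; 0; 0];
    [:: 0; 0; 0; 0; 0; 0; 0; 0];
    [:: 1; 0; 0; 1; 0; 0; 0; 0];
    [:: 0; 0; 0; 0; 1; 0; 0; 1];
    [:: 0; 0; 0; 0; 0; 0; 0; 0];
    [:: 0; 0; 0; 0; 0; 0; 0; 0];
    [:: 0; 0; 0; 0; 1; 0; 0; 1]].
Definition TABp {C : ringType} : seq (seq C) :=
  [:: [:: 1; 0; 0; 1; 0; 0; 0; 0];
    [:: 0; 0; 0; 0; 1; 0; 0; 1];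
    [:: 0; 0; 0; 0; 0; 0; 0; 0];
    [:: 0; 0; 0; 0; 0; 0; 0; 0];
    [:: 0; 0; 0; 0; 0; 0; 0; 0];
    [:: 0; 0; 0; 0; 0; 0; 0; 0];
    [:: 1; 0; 0; 1; 0; 0; 0; 0];
    [:: 0; 0; 0; 0; 1; 0; 0; 1]].
Definition TBAp {C : ringType} : seq (seq C) :=
  [:: [:: 1; 0; 0; 0; 0; 0; 1; 0];
    [:: 0; 0; 0; 0; 0; 0; 0; 0];
    [:: 0; 0; 0; 0; 0; 0; 0; 0];
    [:: 1; 0; 0; 0; 0; 0; 1; 0];
    [:: 0; 1; 0; 0; 0; 0; 0; 1];
    [:: 0; 0; 0; 0; 0; 0; 0; 0];
    [:: 0; 0; 0; 0; 0; 0; 0; 0];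
    [:: 0; 1; 0; 0; 0; 0; 0; 1]].
Definition TAm {C : ringType} : seq (seq C) :=
  [:: [:: 1; 0; 0; 0; 0; 0; -1; 0];
    [:: 0; 1; 0; 0; 0; 0; 0; -1];
    [:: 0; 0; 0; 0; 0; 0; 0; 0];
    [:: 0; 0; 0; 0; 0; 0; 0; 0];
    [:: 0; 0; 0; 0; 0; 0; 0; 0];
    [:: 0; 0; 0; 0; 0; 0; 0; 0];
    [:: -1; 0; 0; 0; 0; 0; 1; 0];
    [:: 0; -1; 0; 0; 0; 0; 0; 1]].
Definition TBm {C : ringType} : seq (seq C) :=
  [:: [:: 1; 0; 0; -1; 0; 0; 0; 0];
    [:: 0; 0; 0; 0; 0; 0; 0; 0];
    [:: 0; 0; 0; 0; 0; 0; 0; 0];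
    [:: -1; 0; 0; 1; 0; 0; 0; 0];
    [:: 0; 0; 0; 0; 1; 0; 0; -1];
    [:: 0; 0; 0; 0; 0; 0; 0; 0];
    [:: 0; 0; 0; 0; 0; 0; 0; 0];
    [:: 0; 0; 0; 0; -1; 0; 0; 1]].
Definition TABm {C : ringType} : seq (seq C) :=
  [:: [:: 1; 0; 0; -1; 0; 0; 0; 0];
    [:: 0; 0; 0; 0; 1; 0; 0; -1];
    [:: 0; 0; 0; 0; 0; 0; 0; 0];
    [:: 0; 0; 0; 0; 0; 0; 0; 0];
    [:: 0; 0; 0; 0; 0; 0; 0; 0];
    [:: 0; 0; 0; 0; 0; 0; 0; 0];
    [:: -1; 0; 0; 1; 0; 0; 0; 0];
    [:: 0; 0; 0; 0; -1; 0; 0; 1]].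
Definition TBAm {C : ringType} : seq (seq C) :=
  [:: [:: 1; 0; 0; 0; 0; 0; -1; 0];
    [:: 0; 0; 0; 0; 0; 0; 0; 0];
    [:: 0; 0; 0; 0; 0; 0; 0; 0];
    [:: -1; 0; 0; 0; 0; 0; 1; 0];
    [:: 0; 1; 0; 0; 0; 0; 0; -1];
    [:: 0; 0; 0; 0; 0; 0; 0; 0];
    [:: 0; 0; 0; 0; 0; 0; 0; 0];
    [:: 0; -1; 0; 0; 0; 0; 0; 1]].

Ltac brute := apply/matrixP;
  case => [[|[|[|[|[|[|[|[|//]]]]]]]] Hi]; case => [[|[|[|[|[|[|[|[|//]]]]]]]] Hj];
  rewrite !mxE !big_ord_recr big_ord0 /= ?mxE /=; ring.

HB.lock Definition lc {C : ringType} (X Y : 'M[C]_8) (a b c d e : C) :=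
  a *: 1%:M + b *: X + c *: Y + d *: (X *m Y) + e *: (Y *m X).

Lemma lcD {C : comRingType} (X Y : 'M[C]_8) a b c d e a' b' c' d' e' :
  lc X Y a b c d e + lc X Y a' b' c' d' e' = lc X Y (a+a') (b+b') (c+c') (d+d') (e+e').
Proof.
by apply/matrixP=> i j; rewrite lc.unlock !mxE; ring.
Qed.

Section LC.
Variables (C : comRingType) (X Y : 'M[C]_8).
Lemma l1 : 1%:M = lc X Y 1 0 0 0 0.
Proof. by apply/matrixP=> i j; rewrite lc.unlock !mxE; ring. Qed.
Lemma lX k : k *: X = lc X Y 0 k 0 0 0.
Proof. by apply/matrixP=> i j; rewrite lc.unlock !mxE; ring. Qed.
Lemma lY k : k *: Y = lc X Y 0 0 k 0 0.
Proof. by apply/matrixP=> i j; rewrite lc.unlock !mxE; ring. Qed.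
Lemma lXY k : k *: (X *m Y) = lc X Y 0 0 0 k 0.
Proof. by apply/matrixP=> i j; rewrite lc.unlock !mxE; ring. Qed.
Lemma lYX k : k *: (Y *m X) = lc X Y 0 0 0 0 k.
Proof. by apply/matrixP=> i j; rewrite lc.unlock !mxE; ring. Qed.
End LC.

Lemma ybe (C: numClosedFieldType) (X Y : 'M[C]_8) x y z :
 X *m X = X -> Y *m Y = Y -> X *m Y *m X = 4^-1 *: X -> Y *m X *m Y = 4^-1 *: Y ->
 x*z != 4 -> y = (x+z+x*z)/(1-4^-1*x*z) ->
 (1%:M + x*:X) *m (1%:M + y*:Y) *m (1%:M + z*:X) = (1%:M + z*:Y) *m (1%:M + y*:X) *m (1%:M + x*:Y).
Proof.
move=> XX YY XYX YXY H Hy.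
rewrite !(mulmxDl, mulmxDr, mul1mx, mulmx1, scalemxAl, scalemxAr, scalerA, mulmxA).
rewrite -?scalemxAl -?scalemxAr ?scalerA -?scalemxAl -?scalemxAr ?scalerA -?scalemxAl -?scalemxAr ?scalerA ?mulmxA.
rewrite ?(XX, YY, XYX, YXY) !scalerA.
rewrite (@l1 _ X Y). rewrite !(@lXY _ X Y). rewrite !(@lYX _ X Y). rewrite !(@lX _ X Y). rewrite !(@lY _ X Y). rewrite !lcD.
have H4 : (4 : C) != 0 by rewrite pnatr_eq0.
have Hd : 1 - 4^-1 * x * z != 0.
  apply: contra H; rewrite subr_eq0 => /eqP h; apply/eqP.
  have -> : x * z = 4 * (4^-1 * x * z) by field.
  by rewrite -h mulr1.
rewrite Hy; congr lc. all: field; by rewrite subr_eq0 eq_sym.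
Qed.

Lemma op12_lin (C : numClosedFieldType) (M N : 'M[C]_4) k :
  op12 (M + k *: N) = op12 M + k *: op12 N.
Proof. by apply/matrixP=> i j; rewrite !mxE; ring. Qed.
Lemma op23_lin (C : numClosedFieldType) (M N : 'M[C]_4) k :
  op23 (M + k *: N) = op23 M + k *: op23 N.
Proof. by apply/matrixP=> i j; rewrite !mxE; ring. Qed.

Ltac brute0 := apply/matrixP;
  case => [[|[|[|[|[|[|[|[|//]]]]]]]] Hi]; case => [[|[|[|[|[|[|[|[|//]]]]]]]] Hj];
  rewrite !mxE /=; ring.

Lemma op12_1 (C : numClosedFieldType) : op12 (1%:M : 'M[C]_4) = 1%:M.
Proof. brute0. Qed.
Lemma op23_1 (C : numClosedFieldType) : op23 (1%:M : 'M[C]_4) = 1%:M.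
Proof. brute0. Qed.

Lemma Ap (C : numClosedFieldType) : op12 (Pplus C) = 2^-1 *: tbl TAp.
Proof. brute0. Qed.
Lemma Bp (C : numClosedFieldType) : op23 (Pplus C) = 2^-1 *: tbl TBp.
Proof. brute0. Qed.
Lemma Am (C : numClosedFieldType) : op12 (Pminus C) = 2^-1 *: tbl TAm.
Proof. brute0. Qed.
Lemma Bm (C : numClosedFieldType) : op23 (Pminus C) = 2^-1 *: tbl TBm.
Proof. brute0. Qed.

Section Prods.
Variable C : comRingType.
Lemma pAA : tbl (@TAp C) *m tbl TAp = 2%:R *: tbl TAp. Proof. brute. Qed.
Lemma pBB : tbl (@TBp C) *m tbl TBp = 2%:R *: tbl TBp. Proof. brute. Qed.
Lemma pAB : tbl (@TAp C) *m tbl TBp = tbl TABp. Proof. brute. Qed.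
Lemma pBA : tbl (@TBp C) *m tbl TAp = tbl TBAp. Proof. brute. Qed.
Lemma pABA : tbl (@TABp C) *m tbl TAp = tbl TAp. Proof. brute. Qed.
Lemma pBAB : tbl (@TBAp C) *m tbl TBp = tbl TBp. Proof. brute. Qed.
Lemma mAA : tbl (@TAm C) *m tbl TAm = 2%:R *: tbl TAm. Proof. brute. Qed.
Lemma mBB : tbl (@TBm C) *m tbl TBm = 2%:R *: tbl TBm. Proof. brute. Qed.
Lemma mAB : tbl (@TAm C) *m tbl TBm = tbl TABm. Proof. brute. Qed.
Lemma mBA : tbl (@TBm C) *m tbl TAm = tbl TBAm. Proof. brute. Qed.
Lemma mABA : tbl (@TABm C) *m tbl TAm = tbl TAm. Proof. brute. Qed.
Lemma mBAB : tbl (@TBAm C) *m tbl TBm = tbl TBm. Proof. brute. Qed.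
End Prods.

Lemma sq_gen (C : numClosedFieldType) (T : 'M[C]_8) :
  T *m T = 2%:R *: T -> (2^-1 *: T) *m (2^-1 *: T) = 2^-1 *: T.
Proof.
move=> h; rewrite -scalemxAl -scalemxAr h !scalerA; congr (_ *: _).
have H2 : (2 : C) != 0 by rewrite pnatr_eq0.
by field.
Qed.

Lemma trip_gen (C : numClosedFieldType) (T S U : 'M[C]_8) :
  T *m S = U -> U *m T = T ->
  (2^-1 *: T) *m (2^-1 *: S) *m (2^-1 *: T) = 4^-1 *: (2^-1 *: T).
Proof.
move=> h1 h2; rewrite -?scalemxAl -?scalemxAr -?scalemxAl -?scalemxAr -?scalemxAl -?scalemxAr ?scalerA h1 h2.
congr (_ *: _).
have H2 : (2 : C) != 0 by rewrite pnatr_eq0.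
by field.
Qed.

Theorem mainTheorem7 (C : numClosedFieldType) (v v' v'' : C) :
  v * v'' != 4 ->
  v' = (v + v'' + v * v'') / (1 - 4^-1 * v * v'') ->
  op12 (Rplus v) *m op23 (Rplus v') *m op12 (Rplus v'')
    = op23 (Rplus v'') *m op12 (Rplus v') *m op23 (Rplus v)
  /\
  op12 (Rminus v) *m op23 (Rminus v') *m op12 (Rminus v'')
    = op23 (Rminus v'') *m op12 (Rminus v') *m op23 (Rminus v).
Proof.
move=> H Hv; rewrite /Rplus /Rminus !op12_lin !op23_lin op12_1 op23_1.
split.
- rewrite !Ap !Bp; apply: ybe => //.
  + exact: sq_gen (pAA C).
  + exact: sq_gen (pBB C).
  + exact: trip_gen (pAB C) (pABA C).
  + exact: trip_gen (pBA C) (pBAB C).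
- rewrite !Am !Bm; apply: ybe => //.
  + exact: sq_gen (mAA C).
  + exact: sq_gen (mBB C).
  + exact: trip_gen (mAB C) (mABA C).
  + exact: trip_gen (mBA C) (mBAB C).
Qed.
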